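(* Let $m\ge 38$ and let $G$ be a graph with maximum spectral radius among all $H(4,3)$-free graphs with $m$ edges and no isolated vertices (such a $G$ is connected). Let $\mathbf{x}$ be the Perron vector of $A(G)$, let $u^*$ be a vertex with $x_{u^*} = \max_{u\in V(G)} x_u$, and let $W = V(G)\setminus N[u^*]$. Then $d(w)\ge 2$ for every $w\in W$.
   Context: All graphs are simple and undirected; $A(G)$ is the adjacency matrix, $\rho(G)$ its largest eigenvalue, and the Perron vector is the unique positive unit eigenvector for $\rho(G)$ of a connected graph. $H(4,3)$ is the graph formed by a cycle of length $4$ and a triangle sharing exactly one common vertex. $N(v)$ is the neighbourhood of $v$, $N[v]=N(v)\cup\{v\}$, and $d(v)$ is the degree of $v$. *)

(* Defs.v *)
From HB Require Import structures.
From mathcomp Require Import all_boot all_order all_algebra.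
From mathcomp Require Import reals.
Set Implicit Arguments. Unset Strict Implicit. Unset Printing Implicit Defensive.
Import Order.TTheory GRing.Theory Num.Theory.
Local Open Scope ring_scope.

Definition simple_graph (n : nat) (e : rel 'I_n) : Prop :=
  symmetric e /\ irreflexive e.

Definition nedges (n : nat) (e : rel 'I_n) : nat :=
  #|[set p : 'I_n * 'I_n | (p.1 < p.2)%N && e p.1 p.2]|.

Definition deg (n : nat) (e : rel 'I_n) (v : 'I_n) : nat := #|[set w | e v w]|.

Definition no_isolated (n : nat) (e : rel 'I_n) : Prop := forall v, (0 < deg e v)%N.

Definition closed_nbhd (n : nat) (e : rel 'I_n) (v : 'I_n) : {set 'I_n} :=
  v |: [set w | e v w].

(* H(4,3): C4 on 0-1-2-3-0 and triangle 0-4-5-0, sharing vertex 0 *)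
Definition H43_edges : seq (nat * nat) :=
  [:: (0,1); (1,2); (2,3); (3,0); (0,4); (4,5); (5,0)]%N.

Definition H43 : rel 'I_6 :=
  fun a b => ((nat_of_ord a, nat_of_ord b) \in H43_edges)
          || ((nat_of_ord b, nat_of_ord a) \in H43_edges).

Definition contains_H43 (n : nat) (e : rel 'I_n) : Prop :=
  exists f : 'I_6 -> 'I_n, injective f /\ forall a b, H43 a b -> e (f a) (f b).

Definition H43_free (n : nat) (e : rel 'I_n) : Prop := ~ contains_H43 e.

Definition adj (R : realType) (n : nat) (e : rel 'I_n) : 'M[R]_n :=
  \matrix_(i, j) (e i j)%:R.

Definition is_spectral_radius (R : realType) (n : nat) (A : 'M[R]_n) (r : R) : Prop :=
  eigenvalue A r /\ forall s, eigenvalue A s -> s <= r.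

Definition is_perron_vector (R : realType) (n : nat) (A : 'M[R]_n) (r : R)
    (x : 'rV[R]_n) : Prop :=
  x *m A = r *: x /\ (forall i, 0 < x 0 i) /\ \sum_i (x 0 i) ^+ 2 = 1.

Definition admissible (n : nat) (e : rel 'I_n) (m : nat) : Prop :=
  simple_graph e /\ H43_free e /\ nedges e = m /\ no_isolated e.

(* Main.v *)
Require Import Defs.
From HB Require Import structures.
From mathcomp Require Import all_boot all_order all_algebra.
From mathcomp Require Import reals.
From mathcomp Require Import ring lra.
From mathcomp Require Import complex spectral sesquilinear.
Import Order.TTheory GRing.Theory Num.Theory Num.Def.
Set Implicit Arguments. Unset Strict Implicit. Unset Printing Implicit Defensive.
Local Open Scope ring_scope.


Definition qf (R : realType) n (A : 'M[R]_n) (y : 'rV[R]_n) : R := (y *m A *m y^T) 0 0.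
Definition nrm (R : realType) n (y : 'rV[R]_n) : R := (y *m y^T) 0 0.

Lemma nrmE (R : realType) n (y : 'rV[R]_n) : nrm y = \sum_i y 0 i ^+ 2.
Proof. by rewrite /nrm mxE; apply: eq_bigr => i _; rewrite mxE expr2. Qed.

Lemma nrm_gt0 (R : realType) n (y : 'rV[R]_n) : y != 0 -> 0 < nrm y.
Proof.
move=> yn0; rewrite nrmE lt_neqAle sumr_ge0 ?andbT; last by move=> i _; exact: sqr_ge0.
apply/negP => /eqP /esym /eqP; rewrite psumr_eq0; last by move=> i _; exact: sqr_ge0.
move/allP => h; apply/negP: yn0; rewrite negbK; apply/eqP/rowP => i.
have := h i (mem_index_enum i); rewrite /= sqrf_eq0 mxE => /eqP ->. by [].
Qed.

Lemma row_delta (R : realType) n (x : 'rV[R]_n) (a b j : 'I_n) :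
  (x *m delta_mx a b) 0 j = x 0 a * (j == b)%:R.
Proof.
rewrite mxE (bigD1 a) //= big1 ?addr0; first by rewrite mxE eqxx.
by move=> i /negbTE hi; rewrite mxE hi mulr0.
Qed.

Lemma qf_delta (R : realType) n (x : 'rV[R]_n) (a b : 'I_n) :
  qf (delta_mx a b) x = x 0 a * x 0 b.
Proof.
rewrite /qf mxE (bigD1 b) //= big1 ?addr0; first by rewrite row_delta eqxx mulr1 mxE.
by move=> i /negbTE hi; rewrite row_delta hi mulr0 mul0r.
Qed.

Lemma qfD (R : realType) n (A B : 'M[R]_n) y : qf (A + B) y = qf A y + qf B y.
Proof. by rewrite /qf mulmxDr mulmxDl !mxE. Qed.
Lemma qfB (R : realType) n (A B : 'M[R]_n) y : qf (A - B) y = qf A y - qf B y.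
Proof. by rewrite /qf mulmxBr mulmxBl !mxE. Qed.

Lemma qf_scalar (R : realType) n (r : R) (y : 'rV[R]_n) : qf r%:M y = r * nrm y.
Proof. by rewrite /qf /nrm mul_mx_scalar -scalemxAl [LHS]mxE. Qed.

Lemma m00B (R : realType) (A B : 'M[R]_1) : (A - B) 0 0 = A 0 0 - B 0 0.
Proof. by rewrite !mxE. Qed.
Lemma m00D (R : realType) (A B : 'M[R]_1) : (A + B) 0 0 = A 0 0 + B 0 0.
Proof. by rewrite !mxE. Qed.
Lemma m00Z (R : realType) a (A : 'M[R]_1) : (a *: A) 0 0 = a * A 0 0.
Proof. by rewrite !mxE. Qed.

Lemma psd_core (R : realType) n (N : 'M[R]_n) x :
  N^T = N -> (forall y, 0 <= qf N y) -> qf N x = 0 -> x *m N = 0.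
Proof.
move=> Nt g0 gx.
set b := x *m N.
have t1 : (x *m N *m b^T) 0 0 = nrm b by [].
have t2 : (b *m N *m x^T) 0 0 = nrm b.
  transitivity ((b *m N *m x^T)^T 0 0); first by rewrite [RHS]mxE.
  by rewrite !trmx_mul Nt trmxK mulmxA -{2}Nt -trmx_mul.
have key t : qf N (x + t *: b) = 2 * t * nrm b + t ^+ 2 * qf N b.
  rewrite /qf linearD /= linearZ /= !mulmxDl !mulmxDr.
  have gx2 : (x *m N *m x^T) 0 0 = 0 := gx.
  rewrite -!scalemxAl -!scalemxAr !m00D !m00Z gx2 t1 t2; ring.
have a0 : 0 <= nrm b by rewrite nrmE sumr_ge0 // => i _; exact: sqr_ge0.
have c0 := g0 b.
set a := nrm b in a0 key *; set c := qf N b in c0 key *.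
have hk : (c + 1)^-1 * (c + 1) = 1 by rewrite mulVf // gt_eqF // ltr_wpDl.
have kp : 0 < (c + 1)^-1 by rewrite invr_gt0 ltr_wpDl.
have := g0 (x + (- a * (c + 1)^-1) *: b); rewrite key.
set k := (c + 1)^-1 in hk kp * => H.
have kc : k * c = 1 - k by rewrite -hk; ring.
have e : 2 * (- a * k) * a + (- a * k) ^+ 2 * c = - (a ^+ 2 * (k * (1 + k))).
  rewrite (_ : (- a * k) ^+ 2 * c = a ^+ 2 * k * (k * c)); last by ring.
  rewrite kc; ring.
rewrite e oppr_ge0 in H.
have hk2 : 0 < k * (1 + k) by apply: mulr_gt0 => //; lra.
have : a ^+ 2 <= 0.
  by rewrite -(pmulr_lle0 _ hk2).
move=> h2; have ha : a <= 0 by nra.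
have : ~~ (0 < a) by rewrite -leNgt.
by apply: contraNeq => /nrm_gt0.
Qed.

Lemma psd_eq (R : realType) n (M : 'M[R]_n) r x :
  M^T = M -> (forall y, qf M y <= r * nrm y) -> qf M x = r * nrm x ->
  x *m M = r *: x.
Proof.
move=> sym hle heq.
have Nt : (r%:M - M)^T = r%:M - M by rewrite linearB /= tr_scalar_mx sym.
have g0 y : 0 <= qf (r%:M - M) y by rewrite qfB qf_scalar subr_ge0.
have gx : qf (r%:M - M) x = 0 by rewrite qfB qf_scalar heq subrr.
have := psd_core Nt g0 gx.
rewrite mulmxBr mul_mx_scalar => /eqP; rewrite subr_eq0 => /eqP ->.
by [].
Qed.

Section Sp.
Local Open Scope complex_scope.
Lemma ctmul (C : numClosedFieldType) m p q (A : 'M[C]_(m,p)) (B : 'M[C]_(p,q)) :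
  ((A *m B) ^t conjC = (B ^t conjC) *m (A ^t conjC))%sesqui.
Proof. by rewrite trmx_mul map_mxM. Qed.

Lemma spec_max (R : realType) n (A : 'M[R]_n) : (0 < n)%N -> A^T = A ->
  exists r, eigenvalue A r /\ forall y, qf A y <= r * nrm y.
Proof.
move=> n0 sym.
pose Ac := map_mx (real_complex R) A.
have Acsym : Ac \is symmetricmx.
  apply/is_hermitianmxP; rewrite expr0 scale1r; apply/matrixP=> i j.
  by rewrite !mxE -[in RHS]sym mxE.
have Acreal : Ac \is a realmx.
  by apply/mxOverP=> i j; rewrite mxE; apply/complex_realP; eexists.
have Ah := realsym_hermsym Acsym Acreal.
have /orthomx_spectralP Aeq := symmetric_normalmx Acsym Acreal.
have Pu := spectral_unitarymx Ac; have Punit := spectral_unit Ac.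
have dreal := hermitian_spectral_diag_real Ah.
move: Aeq; set P := spectralmx Ac; set d := spectral_diag Ac => Aeq.
pose dr i : R := complex.Re (d 0 i).
have hd i : d 0 i = (dr i)%:C by rewrite RRe_real // (mxOverP dreal).
have [k _ kmax] := @arg_maxP _ R 'I_n (Ordinal n0) xpredT dr isT.
exists (dr k); split.
  rewrite eigenvalue_root_char -(fmorph_root (real_complex R)) map_char_poly.
  rewrite -eigenvalue_root_char; apply/eigenvalueP; exists (row k P).
    rewrite -/Ac {1}Aeq -row_mul !mulmxA mulmxV // mul1mx row_mul row_diag_mx.
    by rewrite -scalemxAl -rowE hd.
  apply/negP => /eqP h0.
  have : row k P *m invmx P = 0 by rewrite h0 mul0mx.
  rewrite -row_mul mulmxV // row1 => /rowP /(_ k); rewrite !mxE !eqxx /=.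
  by move/eqP; rewrite oner_eq0.
move=> y.
pose yc := map_mx (real_complex R) y.
have yct : (yc ^t conjC)%sesqui = map_mx (real_complex R) y^T.
  by apply/matrixP=> i j; rewrite !mxE; exact: conjc_real.
have e1 : (qf A y)%:C = (yc *m Ac *m (yc ^t conjC)%sesqui) 0 0.
  by rewrite yct -!map_mxM mxE.
have e2 : (nrm y)%:C = (yc *m (yc ^t conjC)%sesqui) 0 0.
  by rewrite yct -!map_mxM mxE.
pose z := yc *m (P ^t conjC)%sesqui.
have zt : (z ^t conjC)%sesqui = P *m (yc ^t conjC)%sesqui by rewrite ctmul trmxCK.
have e3 : yc *m Ac *m (yc ^t conjC)%sesqui = z *m diag_mx d *m (z ^t conjC)%sesqui.
  by rewrite zt Aeq invmx_unitary // /z !mulmxA.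
have e4 : yc *m (yc ^t conjC)%sesqui = z *m (z ^t conjC)%sesqui.
  by rewrite zt /z !mulmxA mulmxKtV.
have s3 : (z *m diag_mx d *m (z ^t conjC)%sesqui) 0 0 =
   \sum_i d 0 i * (z 0 i * conjC (z 0 i)).
  rewrite mxE; apply: eq_bigr => i _; by rewrite mul_mx_diag !mxE mulrCA mulrA.
have s4 : (z *m (z ^t conjC)%sesqui) 0 0 = \sum_i (z 0 i * conjC (z 0 i)).
  by rewrite mxE; apply: eq_bigr => i _; rewrite !mxE.
rewrite -lecR rmorphM /= e1 e2 e3 e4 s3 s4 mulr_sumr.
apply: ler_sum => i _; apply: ler_wpM2r; first exact: mul_conjC_ge0.
by rewrite hd lecR; apply: kmax.
Qed.

End Sp.

Lemma radius_exists (R : realType) n (A : 'M[R]_n) : (0 < n)%N -> A^T = A ->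
  exists r, is_spectral_radius A r /\ forall y, qf A y <= r * nrm y.
Proof.
move=> n0 sym; have [r [er hr]] := spec_max n0 sym.
exists r; split => //; split => // s /eigenvalueP [v vA vn0].
have := hr v; rewrite /qf vA -scalemxAl m00Z -/(nrm v).
by rewrite ler_pM2r // nrm_gt0.
Qed.


Definition o6 (k : nat) (h : (k < 6)%N) : 'I_6 := Ordinal h.

Lemma h43_two : forall a : 'I_6, exists b c : 'I_6, b != c /\ H43 a b /\ H43 a c.
Proof.
case=> [[|[|[|[|[|[|k]]]]]] hk] //.
- by exists (o6 (isT : (1 < 6)%N)), (o6 (isT : (3 < 6)%N)).
- by exists (o6 (isT : (0 < 6)%N)), (o6 (isT : (2 < 6)%N)).
- by exists (o6 (isT : (1 < 6)%N)), (o6 (isT : (3 < 6)%N)).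
- by exists (o6 (isT : (0 < 6)%N)), (o6 (isT : (2 < 6)%N)).
- by exists (o6 (isT : (0 < 6)%N)), (o6 (isT : (5 < 6)%N)).
- by exists (o6 (isT : (0 < 6)%N)), (o6 (isT : (4 < 6)%N)).
Qed.

Lemma h43_path n (E : rel 'I_n) (f : 'I_6 -> 'I_n) :
  (forall a b, H43 a b -> E (f a) (f b)) ->
  [/\ E (f (o6 (isT : (0 < 6)%N))) (f (o6 (isT : (1 < 6)%N))),
      E (f (o6 (isT : (1 < 6)%N))) (f (o6 (isT : (2 < 6)%N)))
    & E (f (o6 (isT : (2 < 6)%N))) (f (o6 (isT : (3 < 6)%N)))].
Proof. by move=> h; split; apply: h. Qed.

Definition star m : rel 'I_m.+1 := fun a b => (a == ord0) != (b == ord0).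
Arguments star : clear implicits.

Lemma star_adm m : (2 <= m)%N -> admissible (star m) m.
Proof.
move=> m2; split; [split|split; [|split]].
- by move=> a b; rewrite /star; case: (a == ord0); case: (b == ord0).
- by move=> a; rewrite /star eqxx.
- move=> [f [finj fE]]; have [h01 h12 h23] := h43_path fE.
  move: h01 h12 h23; rewrite /star.
  set f0 := f _; set f1 := f _; set f2 := f _; set f3 := f _.
  have i02 : f0 <> f2 by move/finj.
  have i13 : f1 <> f3 by move/finj.
  case: (f0 =P ord0) => [e0|_]; case: (f1 =P ord0) => [e1|_] //= _;
    case: (f2 =P ord0) => [e2|_] //= _; case: (f3 =P ord0) => [e3|_] //= _.
  + by apply: i02; rewrite e0 e2.
  + by apply: i13; rewrite e1 e3.
- rewrite /nedges.
  have -> : [set p : 'I_m.+1 * 'I_m.+1 | (p.1 < p.2)%N && star m p.1 p.2] =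
            setX [set ord0] [set~ ord0].
    apply/setP => -[a b]; rewrite !inE /= /star.
    case: (a =P ord0) => [->|ha]; case: (b =P ord0) => [->|hb] //=.
      rewrite andbT lt0n; apply/negP => /eqP hb0; apply: hb; exact: val_inj.
    by rewrite andbF.
  rewrite (cardsX [set ord0] [set~ ord0]).
  by rewrite cards1 cardsC1 card_ord mul1n.
- move=> v; apply/card_gt0P.
  case: (v =P ord0) => [->|hv].
    have h1 : (1 < m.+1)%N := ltnW m2.
    by exists (Ordinal h1); rewrite inE /star eqxx.
  by exists ord0; rewrite inE /star eqxx; case: (v =P ord0).
Qed.

Lemma qf_e (R : realType) n (A : 'M[R]_n) (a b : 'I_n) :
  (('e_a : 'rV[R]_n) *m A *m ('e_b : 'rV[R]_n)^T) 0 0 = A a b.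
Proof.
rewrite -rowE mxE (bigD1 b) //= big1 ?addr0; first by rewrite !mxE !eqxx mulr1.
by move=> j /negbTE hj; rewrite !mxE hj andbF mulr0.
Qed.

Lemma ee_e (R : realType) n (a b : 'I_n) :
  (('e_a : 'rV[R]_n) *m ('e_b : 'rV[R]_n)^T) 0 0 = (a == b)%:R.
Proof.
rewrite -[('e_a : 'rV[R]_n)]mulmx1 qf_e mxE //.
Qed.

Lemma star_big (R : realType) m (r : R) : (2 <= m)%N ->
  (forall y, qf (adj R (star m)) y <= r * nrm y) -> 1 < r.
Proof.
move=> m2 hr.
have h1 : (1 < m.+1)%N := ltnW m2.
have h2 : (2 < m.+1)%N := m2.
pose a0 : 'I_m.+1 := ord0; pose a1 := Ordinal h1; pose a2 := Ordinal h2.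
have := hr ('e_a0 + 'e_a1 + 'e_a2 : 'rV[R]_m.+1).
rewrite /qf /nrm !linearD /= !mulmxDl !m00D !qf_e !ee_e !mxE /star /=.
lra.
Qed.


Definition sp n (c d a b : 'I_n) : bool := ((a == c) && (b == d)) || ((a == d) && (b == c)).

Lemma sp_sym n (c d a b : 'I_n) : sp c d a b = sp c d b a.
Proof. by rewrite /sp orbC; congr (_ || _); rewrite andbC. Qed.

Definition op n (a b : 'I_n) : 'I_n * 'I_n := if (a < b)%N then (a, b) else (b, a).

Lemma opP n (a b : 'I_n) (p : 'I_n * 'I_n) : a != b ->
  ((p.1 < p.2)%N && sp a b p.1 p.2) = (p == op a b).
Proof.
case: p => p1 p2 /= ab; rewrite /op /sp.
case: (ltngtP a b) => h.
- apply/idP/idP.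
    case/andP => lt /orP [/andP[/eqP-> /eqP->] | /andP[/eqP e1 /eqP e2]].
      by rewrite !eqxx.
    by rewrite e1 e2 in lt; move: (ltn_trans lt h); rewrite ltnn.
  by case/eqP => -> ->; rewrite h !eqxx.
- apply/idP/idP.
    case/andP => lt /orP [/andP[/eqP e1 /eqP e2] | /andP[/eqP-> /eqP->]].
      by rewrite e1 e2 in lt; move: (ltn_trans lt h); rewrite ltnn.
    by rewrite !eqxx.
  by case/eqP => -> ->; rewrite h !eqxx orbT.
- by move: ab; rewrite (val_inj h) eqxx.
Qed.

Lemma adj_sym (R : realType) n (e : rel 'I_n) : symmetric e -> (adj R e)^T = adj R e.
Proof. by move=> es; apply/matrixP => i j; rewrite !mxE es. Qed.

Lemma bool_entry (R : realType) (E a b c d : bool) :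
  [&& c ==> E, d ==> E, a ==> ~~E, b ==> ~~E, ~~(a&&b), ~~(a&&c), ~~(a&&d), ~~(b&&c),
      ~~(b&&d) & ~~(c&&d)] ->
  (((E && ~~(c || d)) || (a || b))%:R : R) = E%:R + (a%:R + b%:R - c%:R - d%:R).
Proof.
by case: E; case: a; case: b; case: c; case: d => //= _; lra.
Qed.

Lemma mB (R : realType) p q (A B : 'M[R]_(p, q)) i j : (A - B) i j = A i j - B i j.
Proof. by rewrite !mxE. Qed.
Lemma mN (R : realType) p q (A : 'M[R]_(p, q)) i j : (- A) i j = - A i j.
Proof. by rewrite !mxE. Qed.
Lemma mD (R : realType) p q (A B : 'M[R]_(p, q)) i j : (A + B) i j = A i j + B i j.
Proof. by rewrite !mxE. Qed.

Lemma aux (R : realType) (r a b : R) : 1 < r -> 0 < a -> a = r * b -> b = r * a -> False.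
Proof.
move=> h1 h2 h3 h4; rewrite h4 in h3.
have e : (r * r - 1) * a = 0 by rewrite mulrBl mul1r -mulrA -h3 subrr.
have : 0 < (r * r - 1) * a by apply: mulr_gt0 => //; nra.
by rewrite e ltxx.
Qed.

Unset Implicit Arguments.
Theorem mainTheorem4 (R : realType) (m n : nat) (e : rel 'I_n) (rho : R)
    (x : 'rV[R]_n) (ustar : 'I_n) :
  (38 <= m)%N ->
  admissible e m ->
  is_spectral_radius (adj R e) rho ->
  (forall (n' : nat) (e' : rel 'I_n') (r' : R),
      admissible e' m -> is_spectral_radius (adj R e') r' -> r' <= rho) ->
  is_perron_vector (adj R e) rho x ->
  (forall u, x 0 u <= x 0 ustar) ->
  forall w, w \in ~: closed_nbhd e ustar -> (2 <= deg e w)%N.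
Proof.
move=> m38 adm rad maxi [xA [xpos xsum]] xmax w.
have [[esym eirr] [hfree [hm hnoiso]]] := adm.
rewrite in_setC /closed_nbhd in_setU1 inE negb_or => /andP [wu euw].
set u := ustar in wu euw xmax.
have n0 : (0 < n)%N := leq_ltn_trans (leq0n u) (ltn_ord u).
have m2 : (2 <= m)%N by apply: leq_trans _ m38.
have rho1 : 1 < rho.
  have [rs [rads hs]] := @radius_exists R m.+1 (adj R (star m)) isT
     (adj_sym R (proj1 (proj1 (star_adm m2)))).
  have := maxi _ _ _ (star_adm m2) rads.
  have := star_big m2 hs.
  exact: lt_le_trans.
have nrmx : nrm x = 1 by rewrite nrmE.
have col j : \sum_i x 0 i * (e i j)%:R = rho * x 0 j.
  rewrite -(_ : (x *m adj R e) 0 j = rho * x 0 j); last by rewrite xA mxE.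
  by rewrite mxE; apply: eq_bigr => i _; rewrite mxE.
rewrite leqNgt; apply/negP => hdeg.
have /cards1P [v hv] : #|[set y | e w y]| == 1%N.
  by move: (hnoiso w) hdeg; rewrite /deg; case: #|[set y | e w y]| => [|[|k]].
have hN y : e w y = (y == v).
  by have := congr1 (fun S : {set 'I_n} => y \in S) hv; rewrite !inE.
have ewv : e w v by rewrite hN.
have wv : w != v by apply/eqP => h; move: ewv; rewrite h eirr.
have vu : v != u by apply/eqP => h; move: euw; rewrite esym -h ewv.
have colw : \sum_i x 0 i * (e i w)%:R = x 0 v.
  rewrite (bigD1 v) //= esym ewv mulr1 big1 ?addr0 // => i iv.
  by rewrite esym hN (negbTE iv) mulr0.
have xv0 := xpos v; have xw0 := xpos w.
case: (boolP [exists z, e v z && (z != w)]); last first.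
  rewrite negb_exists => /forallP hz.
  have colv : \sum_i x 0 i * (e i v)%:R = x 0 w.
    rewrite (bigD1 w) //= ewv mulr1 big1 ?addr0 // => i iw.
    have := hz i; rewrite esym negb_and negbK => /orP [/negbTE -> | /eqP h].
      by rewrite mulr0.
    by move: iw; rewrite h eqxx.
  have h1 := col w; have h2 := col v.
  rewrite colw in h1; rewrite colv in h2.
  exact: (aux rho1 xv0 h1 h2).
case/existsP => z /andP [evz zw].
pose e' := fun a b : 'I_n => (e a b && ~~ sp w v a b) || sp w u a b.
have zv : z != v by apply/eqP => h; move: evz; rewrite h eirr.
have euw' : ~~ e w u by rewrite esym.
have e'sym : symmetric e' by move=> a b; rewrite /e' esym sp_sym (sp_sym w u).
have e'irr : irreflexive e'.
  move=> a; rewrite /e' eirr /= /sp.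
  by apply/negP => /orP [] /andP [/eqP -> /eqP h]; move: wu; rewrite h eqxx.
have e'w y : e' w y -> y = u.
  rewrite /e' /sp hN !eqxx /= (negbTE wv) (negbTE wu) /= ?orbF ?andbF.
  by case: (y == v) => //= /eqP.
have e'ne a b : a != w -> b != w -> e' a b -> e a b.
  move=> /negbTE aw /negbTE bw; rewrite /e' /sp aw bw /= ?andbF ?orbF.
  by case/andP.
have adm' : admissible e' m.
  split; [by split|split; [|split]].
  - move=> [f [finj fE]].
    case: (boolP [exists a, f a == w]) => [/existsP [a /eqP fa]|].
      have [b [c [bc [hb hc]]]] := h43_two a.
      have := fE _ _ hb; have := fE _ _ hc; rewrite fa => /e'w hfc /e'w hfb.
      by move: bc; rewrite (finj _ _ (etrans hfb (sym_eq hfc))) eqxx.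
    rewrite negb_exists => /forallP hf; apply: hfree; exists f; split => // a b hab.
    exact: e'ne (hf a) (hf b) (fE _ _ hab).
  - rewrite -hm /nedges.
    set S := [set p : 'I_n * 'I_n | (p.1 < p.2)%N && e p.1 p.2].
    have -> : [set p : 'I_n * 'I_n | (p.1 < p.2)%N && e' p.1 p.2] = op w u |: (S :\ op w v).
      apply/setP => p; rewrite !inE /e' -(opP p wu) -(opP p wv).
      by case: (p.1 < p.2)%N => //=; rewrite orbC andbC.
    have inS q : (q \in S) = (q.1 < q.2)%N && e q.1 q.2 by rewrite inE.
    have opwu : op w u \notin S.
      have := opP (op w u) wu; rewrite eqxx => /andP [_ hsp].
      rewrite inS negb_and; apply/orP; right.
      by case/orP: hsp => /andP [/eqP -> /eqP ->]; [exact: euw' | exact: euw].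
    have opwv : op w v \in S.
      have := opP (op w v) wv; rewrite eqxx => /andP [hlt hsp].
      rewrite inS hlt /=.
      by case/orP: hsp => /andP [/eqP -> /eqP ->]; [exact: ewv | rewrite esym].
    rewrite cardsU1 [in RHS](cardsD1 (op w v)) opwv in_setD1 negb_and.
    by rewrite (negbTE opwu) orbT.
  - move=> y; apply/card_gt0P.
    case: (y =P w) => [->|yw].
      by exists u; rewrite inE /e' /sp !eqxx /= ?orbT.
    case: (y =P v) => [->|yv].
      by exists z; rewrite inE /e' /sp evz eqxx (negbTE zw) (eq_sym v w) (negbTE wv).
    have /card_gt0P [t ht] := hnoiso y; rewrite inE in ht.
    by exists t; rewrite inE /e' ht /sp (introF eqP yw) (introF eqP yv).
have [r' [rad' hr']] := radius_exists n0 (adj_sym R e'sym).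
have r'le := maxi _ _ _ adm' rad'.
pose D : 'M[R]_n := delta_mx w u + delta_mx u w - delta_mx w v - delta_mx v w.
have A'E : adj R e' = adj R e + D.
  apply/matrixP => i j; rewrite /D !mD !mN /adj !mxE /e' /sp.
  apply: bool_entry.
  repeat (apply/andP; split).
  - by apply/implyP => /andP [/eqP -> /eqP ->].
  - by apply/implyP => /andP [/eqP -> /eqP ->]; rewrite esym.
  - by apply/implyP => /andP [/eqP -> /eqP ->].
  - by apply/implyP => /andP [/eqP -> /eqP ->].
  - by apply/negP => /andP [/andP [/eqP -> _] /andP [/eqP h _]]; move: wu; rewrite h eqxx.
  - by apply/negP => /andP [/andP [_ /eqP ->] /andP [_ /eqP h]]; move: vu; rewrite h eqxx.
  - by apply/negP => /andP [/andP [/eqP -> _] /andP [/eqP h _]]; move: wv; rewrite h eqxx.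
  - by apply/negP => /andP [/andP [/eqP -> _] /andP [/eqP h _]]; move: wu; rewrite h eqxx.
  - by apply/negP => /andP [/andP [/eqP -> _] /andP [/eqP h _]]; move: vu; rewrite h eqxx.
  - by apply/negP => /andP [/andP [/eqP -> _] /andP [/eqP h _]]; move: wv; rewrite h eqxx.
have qA : qf (adj R e) x = rho by rewrite /qf xA -scalemxAl m00Z -/(nrm x) nrmx mulr1.
have qA' : qf (adj R e') x = rho + 2 * x 0 w * (x 0 u - x 0 v).
  rewrite A'E qfD qA /D !qfB qfD !qf_delta; ring.
have q1 : rho <= qf (adj R e') x.
  rewrite qA' lerDl; apply: mulr_ge0; first by apply: mulr_ge0 => //; exact: ltW.
  by rewrite subr_ge0.
have q2 : qf (adj R e') x <= r' by have := hr' x; rewrite nrmx mulr1.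
have r'rho : r' = rho by apply/le_anti; rewrite r'le /= (le_trans q1 q2).
have heq : qf (adj R e') x = r' * nrm x.
  by rewrite nrmx mulr1; apply/le_anti; rewrite q2 r'rho q1.
have hxA' := psd_eq (adj_sym R e'sym) hr' heq.
have := congr1 (fun M : 'rV[R]_n => M 0 v) hxA'.
rewrite A'E mulmxDr xA /D !mulmxDr !mulmxN !mD !mN !row_delta !mxE.
rewrite eqxx (negbTE vu) (eq_sym v w) (negbTE wv) r'rho.
move=> h.
have : x 0 w = 0 by move: h; rewrite /= ?mulr0n ?mulr1n ?mulr0 ?mulr1; lra.
by move=> h0; move: xw0; rewrite h0 ltxx.
Qed.
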